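(* Let $\alpha,\beta\in\Bbbk^n$, let $\mathcal H=\mathcal H(\alpha,\beta,0)$ and let $M$ be the adjacency matrix of $Q$. Then the matrix-valued Hilbert series of $\mathcal H$ is \[h_{\mathcal H}(t)=(I-Mt+Mt^3-It^4)^{-1}=(I-Mt+It^2)^{-1}(1-t^2)^{-1}.\]
   Context: $\Bbbk$ is an algebraically closed field of characteristic zero. Fix $n\ge1$; indices mod $n$, $Q_0=\{0,\dots,n-1\}$. $Q$ is the quiver with vertices $Q_0$ and arrows $u_i:i\to i+1$, $d_i:i+1\to i$; paths are written left to right, $e_i$ is the trivial path at $i$. $\mathcal H(\alpha,\beta,0)$ is $\Bbbk Q$ modulo the relations $d_{i-1}u_{i-1}u_i=\alpha_iu_id_iu_i+\beta_iu_iu_{i+1}d_{i+1}$ and $d_id_{i-1}u_{i-1}=\alpha_id_iu_id_i+\beta_iu_{i+1}d_{i+1}d_i$ for all $i\in Q_0$, graded by path length. The adjacency matrix $M\in M_n(\mathbb N)$ has $(i,j)$ entry the number of arrows from $i$ to $j$. The matrix-valued Hilbert series is $\sum_kH_kt^k$ with $(H_k)_{ij}=\dim_\Bbbk e_i\mathcal H_ke_j$. *)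

(* Defs.v *)
From HB Require Import structures.
From mathcomp Require Import all_boot all_algebra.
Set Implicit Arguments. Unset Strict Implicit. Unset Printing Implicit Defensive.
Import GRing.Theory.
Local Open Scope ring_scope.

(* Quiver Q: vertices 'I_n (indices mod n), arrows u_i : i -> i+1 encoded as
   (i, true) and d_i : i+1 -> i encoded as (i, false). *)
Section Quiver.
Variable n : nat.

Definition arrow := ('I_n * bool)%type.
Definition U (i : 'I_n) : arrow := (i, true).
Definition D (i : 'I_n) : arrow := (i, false).
Definition src (a : arrow) : 'I_n := if a.2 then a.1 else ordS a.1.
Definition tgt (a : arrow) : 'I_n := if a.2 then ordS a.1 else a.1.

(* a path of Q: start vertex and a word of arrows, read left to right *)
Definition qpath := ('I_n * seq arrow)%type.
Fixpoint validp (v : 'I_n) (w : seq arrow) : bool :=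
  if w is a :: w' then (src a == v) && validp (tgt a) w' else true.
Definition endpt (v : 'I_n) (w : seq arrow) : 'I_n := foldl (fun _ a => tgt a) v w.
Definition pmul (p q : qpath) : option qpath :=
  if endpt p.1 p.2 == q.1 then Some (p.1, p.2 ++ q.2) else None.

Definition allpaths (k : nat) : seq qpath :=
  flatten [seq [seq (v, val t) | v <- enum 'I_n, t <- enum {: m.-tuple arrow}]
          | m <- iota 0 k.+1].
Definition validpaths (k : nat) : seq qpath :=
  [seq p <- allpaths k | validp p.1 p.2].

Definition adjM : 'M[int]_n :=
  \matrix_(i, j) (#|[pred a : arrow | (src a == i) && (tgt a == j)]|%:Z).

Variable K : fieldType.

Definition elt := seq (K * qpath).
Definition emul (x y : elt) : elt :=
  flatten [seq [seq (a.1 * b.1, pq) | pq <- oapp (fun z => [:: z]) [::] (pmul a.2 b.2)]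
          | a <- x, b <- y].

(* degree-k component of kQ, with coordinates indexed by (start vertex, k-word) *)
Definition Pk (k : nat) := ('I_n * k.-tuple arrow)%type.
Definition Nk (k : nat) := #|{: Pk k}|.
Definition bvec (k : nat) (p : qpath) : 'rV[K]_(Nk k) :=
  match (insub p.2 : option (k.-tuple arrow)) with
  | Some t => delta_mx 0 (enum_rank ((p.1, t) : Pk k))
  | None => 0
  end.
Definition vec (k : nat) (x : elt) : 'rV[K]_(Nk k) := \sum_(c <- x) c.1 *: bvec k c.2.

Definition rel1 (al be : 'I_n -> K) (i : 'I_n) : elt :=
  [:: (1, (i, [:: D (ord_pred i); U (ord_pred i); U i]));
      (- al i, (i, [:: U i; D i; U i]));
      (- be i, (i, [:: U i; U (ordS i); D (ordS i)]))].
Definition rel2 (al be : 'I_n -> K) (i : 'I_n) : elt :=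
  [:: (1, (ordS i, [:: D i; D (ord_pred i); U (ord_pred i)]));
      (- al i, (ordS i, [:: D i; U i; D i]));
      (- be i, (ordS i, [:: U (ordS i); D (ordS i); D i]))].
Definition rels (al be : 'I_n -> K) : seq elt :=
  [seq rel1 al be i | i <- enum 'I_n] ++ [seq rel2 al be i | i <- enum 'I_n].

(* degree-k part of the two-sided ideal generated by the relations:
   span of the degree-k components of p * r * q, p q paths, r a relation *)
Definition idealk (al be : 'I_n -> K) (k : nat) : {vspace 'rV[K]_(Nk k)} :=
  <<flatten [seq [seq vec k (emul (emul [:: (1, p)] r) [:: (1, q)])
                  | q <- validpaths k]
              | p <- validpaths k, r <- rels al be]>>%VS.

Definition tuples (k : nat) : seq (k.-tuple arrow) := enum {: k.-tuple arrow}.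

Definition pathspace (i j : 'I_n) (k : nat) : {vspace 'rV[K]_(Nk k)} :=
  <<[seq bvec k (i, val t) | t <- [seq t <- tuples k
                                   | validp i (val t) && (endpt i (val t) == j)]]>>%VS.

(* dim e_i H_k e_j = dim (e_i kQ_k e_j) - dim (e_i I_k e_j) *)
Definition hdim (al be : 'I_n -> K) (i j : 'I_n) (k : nat) : nat :=
  (\dim (pathspace i j k) - \dim (pathspace i j k :&: idealk al be k))%N.

Definition Hmat (al be : 'I_n -> K) (k : nat) : 'M[int]_n :=
  \matrix_(i, j) (hdim al be i j k)%:Z.

End Quiver.

(* matrix-valued formal power series as coefficient sequences *)
Definition psmul (n : nat) (A B : nat -> 'M[int]_n) (k : nat) : 'M[int]_n :=
  \sum_(l < k.+1) A l *m B (k - l)%N.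
Definition pscoef (n : nat) (s : seq 'M[int]_n) (k : nat) : 'M[int]_n := nth 0 s k.
Definition psone (n : nat) (k : nat) : 'M[int]_n := if k == 0%N then 1%:M else 0.
Definition ps_inverse (n : nat) (A B : nat -> 'M[int]_n) : Prop :=
  (forall k, psmul A B k = psone n k) /\ (forall k, psmul B A k = psone n k).

(* Main.v *)
Require Import Defs.
From HB Require Import structures.
From mathcomp Require Import all_boot all_algebra.
From mathcomp Require Import ring zify.
Set Implicit Arguments. Unset Strict Implicit. Unset Printing Implicit Defensive.
Import GRing.Theory.
Local Open Scope ring_scope.

Section Words.
Variable n : nat.
Implicit Types (v s : 'I_n) (bs A B C : seq bool).

Definition step v (b : bool) : 'I_n := if b then ordS v else ord_pred v.
Definition barrow v (b : bool) : arrow n := if b then U v else D (ord_pred v).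
Fixpoint mkw v bs : seq (arrow n) :=
  if bs is b :: bs' then barrow v b :: mkw (step v b) bs' else [::].
Definition vend v bs := foldl step v bs.

Lemma tgt_barrow v b : tgt (barrow v b) = step v b.
Proof. by case: b. Qed.
Lemma src_barrow v b : src (barrow v b) = v.
Proof. by case: b => //=; rewrite /src /= ord_predK. Qed.

Lemma mkw_cat v A B : mkw v (A ++ B) = mkw v A ++ mkw (vend v A) B.
Proof. by elim: A v => //= b A IH v; rewrite IH. Qed.
Lemma vend_cat v A B : vend v (A ++ B) = vend (vend v A) B.
Proof. exact: foldl_cat. Qed.
Lemma size_mkw v bs : size (mkw v bs) = size bs.
Proof. by elim: bs v => //= b bs IH v; rewrite IH. Qed.
Lemma map_snd_mkw v bs : map snd (mkw v bs) = bs.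
Proof. by elim: bs v => //= b bs IH v; rewrite IH; case: b. Qed.
Lemma valid_mkw v bs : validp v (mkw v bs).
Proof. by elim: bs v => //= b bs IH v; rewrite src_barrow eqxx tgt_barrow IH. Qed.
Lemma endpt_mkw v bs : endpt v (mkw v bs) = vend v bs.
Proof.
elim: bs v => //= b bs IH v.
by rewrite /endpt /= -/(endpt _ _) tgt_barrow IH.
Qed.
Lemma endpt_cons v a w : endpt v (a :: w) = endpt (tgt a) w.
Proof. by []. Qed.
Lemma mkw_valid v (t : seq (arrow n)) : validp v t -> t = mkw v (map snd t).
Proof.
elim: t v => //= [[x b] t] IH v /andP [/eqP hs hv].
rewrite /src /= in hs; case: b hs hv => /= hs hv.
  by subst x; rewrite -(IH _ hv).
have hx : x = ord_pred v by rewrite -hs ordSK.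
subst x; rewrite /tgt /= in hv.
by rewrite {1}(IH _ hv).
Qed.
End Words.

Section Confl.
Variable n : nat.
Variable K : fieldType.
Variables al be : 'I_n -> K.
Variable k : nat.
Implicit Types (v s : 'I_n) (bs A B C : seq bool).

Definition bv s bs : 'rV[K]_(Nk n k) := bvec K k (s, mkw s bs).
Definition lead (y : bool) := [:: false; y; true].
Definition t1 (y : bool) := if y then [:: true; false; true] else [:: false; true; false].
Definition t2 (y : bool) := if y then [:: true; true; false] else [:: true; false; false].
Definition ca (y : bool) v := if y then al v else al (ord_pred v).
Definition cb (y : bool) v := if y then be v else be (ord_pred v).
Definition Gen s A y B : 'rV[K]_(Nk n k) :=
  bv s (A ++ lead y ++ B) - ca y (vend s A) *: bv s (A ++ t1 y ++ B)
  - cb y (vend s A) *: bv s (A ++ t2 y ++ B).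

Fixpoint mu bs := if bs is b :: bs' then ((if b then 0 else (size bs').+1) + mu bs')%N else 0%N.
Definition nD bs := count negb bs.

Lemma mu_cat A B : mu (A ++ B) = (mu A + nD A * size B + mu B)%N.
Proof.
elim: A => //= b A IH; rewrite IH /nD /= size_cat.
case: b => /=; rewrite ?mulSn; lia.
Qed.

Lemma mu_ctx A B X Y : size X = size Y -> nD X = nD Y -> (mu X < mu Y)%N ->
  (mu (A ++ X ++ B) < mu (A ++ Y ++ B))%N.
Proof.
move=> hs hd hm; rewrite !mu_cat !size_cat hs hd; lia.
Qed.

Lemma mu_t1 A y B : (mu (A ++ t1 y ++ B) < mu (A ++ lead y ++ B))%N.
Proof. by apply: mu_ctx; case: y. Qed.
Lemma mu_t2 A y B : (mu (A ++ t2 y ++ B) < mu (A ++ lead y ++ B))%N.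
Proof. by apply: mu_ctx; case: y. Qed.

Lemma vend_t1 v y : vend v (t1 y) = vend v (lead y).
Proof. by case: y; rewrite /vend /= ?ordSK ?ord_predK. Qed.
Lemma vend_t2 v y : vend v (t2 y) = vend v (lead y).
Proof. by case: y; rewrite /vend /= ?ordSK ?ord_predK. Qed.

Lemma cat_split (T : Type) (A B A' B' : seq T) : (size A <= size A')%N ->
  A ++ B = A' ++ B' -> exists D, A' = A ++ D /\ B = D ++ B'.
Proof.
move=> hs h; exists (drop (size A) A').
have hA : take (size A) A' = A.
  have := congr1 (take (size A)) h; rewrite take_size_cat // take_cat.
  case: ltnP => h2 he; first by rewrite {2}he.
  have e : size A = size A' by apply/eqP; rewrite eqn_leq hs h2.
  by rewrite e take_size he e subnn take0 cats0.
split; first by rewrite -{1}(cat_take_drop (size A) A') hA.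
have := congr1 (drop (size A)) h.
rewrite drop_size_cat // drop_cat; case: ltnP => h2.
  by [].
have -> : size A = size A' by apply/eqP; rewrite eqn_leq hs h2.
by rewrite subnn drop0 drop_size.
Qed.

Lemma Gen_overlap s A B :
  Gen s A false (true :: B) - Gen s (A ++ [:: false]) true B =
  cb false (vend s A) *: (Gen s A true (false :: B) - Gen s (A ++ [:: true]) false B).
Proof.
rewrite /Gen !vend_cat /lead /t1 /t2 /ca /cb /= ordSK.
rewrite -!catA /=.
by apply/rowP => j; rewrite !mxE; ring.
Qed.

Lemma Gen_disjoint s A y C y' B :
  let v := vend s A in let v' := vend s (A ++ lead y ++ C) in
  Gen s A y (C ++ lead y' ++ B) - Gen s (A ++ lead y ++ C) y' B =
  ca y' v' *: Gen s A y (C ++ t1 y' ++ B) + cb y' v' *: Gen s A y (C ++ t2 y' ++ B)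
  - ca y v *: Gen s (A ++ t1 y ++ C) y' B - cb y v *: Gen s (A ++ t2 y ++ C) y' B.
Proof.
move=> v v'; rewrite /Gen.
have e1 : vend s (A ++ t1 y ++ C) = v' by rewrite /v' !vend_cat vend_t1.
have e2 : vend s (A ++ t2 y ++ C) = v' by rewrite /v' !vend_cat vend_t2.
rewrite e1 e2 -/v' -/v.
rewrite !catA.
by apply/rowP => j; rewrite !mxE; ring.
Qed.

Section WithJ.
Variable J : {vspace 'rV[K]_(Nk n k)}.

Lemma conf s A y B A' y' B' :
  (size A <= size A')%N -> A ++ lead y ++ B = A' ++ lead y' ++ B' ->
  (forall A1 y1 B1, (mu (A1 ++ lead y1 ++ B1) < mu (A ++ lead y ++ B))%N ->
        Gen s A1 y1 B1 \in J) ->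
  Gen s A y B - Gen s A' y' B' \in J.
Proof.
move=> hs h IH.
have [D [hA' hB]] := cat_split hs h; subst A'; clear h hs.
case: D hB => [|d0 [|d1 [|d2 C]]] /= hB.
- case: hB => -> ->; by rewrite cats0 subrr rpred0.
- case: hB => ? ? ? ?; subst.
  rewrite Gen_overlap; apply: rpredZ; apply: rpredB; apply: IH.
    exact: (@mu_ctx A B' [:: false; true; true; false] [:: false; false; true; true]).
  rewrite -catA.
  exact: (@mu_ctx A B' [:: true; false; false; true] [:: false; false; true; true]).
- by case: hB.
- case: hB => h0 h1 h2 hB'; subst d0 d1 d2 B.
  have -> : [:: false, y, true & C] = lead y ++ C by [].
  rewrite Gen_disjoint; apply: rpredB; [apply: rpredB; [apply: rpredD|]|];
    apply: rpredZ; apply: IH; rewrite -?catA.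
  + by have h := @mu_ctx (A ++ lead y ++ C) B' (t1 y') (lead y'); rewrite -?catA in h;
       apply: h; case: y'.
  + by have h := @mu_ctx (A ++ lead y ++ C) B' (t2 y') (lead y'); rewrite -?catA in h;
       apply: h; case: y'.
  + by apply: (@mu_ctx A (C ++ lead y' ++ B') (t1 y) (lead y)); case: y.
  + by apply: (@mu_ctx A (C ++ lead y' ++ B') (t2 y) (lead y)); case: y.
Qed.
End WithJ.
End Confl.

Section Deltas.
Variable K : fieldType.

Lemma free_deltas m (S : seq 'I_m) : uniq S -> free [seq ('e_j : 'rV[K]_m) | j <- S].
Proof.
elim: S => [|j S IH] /=; first by rewrite /free span_nil dimv0.
case/andP => hj hu; rewrite free_cons IH // andbT.
apply/negP => hin.
have hsp := coord_span (X := in_tuple [seq ('e_j : 'rV[K]_m) | j <- S]) hin.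
have := congr1 (fun x : 'rV[K]_m => x 0 j) hsp; rewrite /= summxE mxE !eqxx /=.
rewrite big1; first by move/eqP; rewrite oner_eq0.
move=> i _.
have hi : (i < size S)%N by case: i => /= i; rewrite size_map.
rewrite mxE (nth_map j) // mxE eqxx /=.
have : nth j S i != j.
  by apply: contraNneq hj => <-; apply: mem_nth.
by rewrite eq_sym => /negbTE ->; rewrite mulr0.
Qed.

Lemma dim_deltas m (S : seq 'I_m) : uniq S ->
  \dim <<[seq ('e_j : 'rV[K]_m) | j <- S]>> = size S.
Proof. by move/(free_deltas)/eqP => ->; rewrite size_map. Qed.
End Deltas.

Section T.
Variable n : nat.
Variable K : fieldType.
Variables al be : 'I_n -> K.
Variable k : nat.
Lemma vec_rel1 s A i e B : vec k (emul (emul [:: (1, (s, A))] (rel1 al be i)) [:: (1, (e, B))]) = if (endpt s A == i) && (ordS i == e) then bvec K k (s, A ++ [:: D (ord_pred i); U (ord_pred i); U i] ++ B) - al i *: bvec K k (s, A ++ [:: U i; D i; U i] ++ B) - be i *: bvec K k (s, A ++ [:: U i; U (ordS i); D (ordS i)] ++ B) else 0.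
Proof.
rewrite /emul /pmul /=.
have ec : forall v (w1 w2 : seq (arrow n)), endpt v (w1 ++ w2) = endpt (endpt v w1) w2.
  by move=> v w1 w2; rewrite /endpt foldl_cat.
case: eqP => hA /=; last by rewrite /vec big_nil.
rewrite !ec hA /=.
case: eqP => he /=; last by rewrite /vec big_nil.
rewrite /vec !big_cons big_nil -!catA /=.
by apply/rowP => j; rewrite !mxE; ring.
Qed.
Lemma vec_rel2 s A i e B : vec k (emul (emul [:: (1, (s, A))] (rel2 al be i)) [:: (1, (e, B))]) = if (endpt s A == ordS i) && (i == e) then bvec K k (s, A ++ [:: D i; D (ord_pred i); U (ord_pred i)] ++ B) - al i *: bvec K k (s, A ++ [:: D i; U i; D i] ++ B) - be i *: bvec K k (s, A ++ [:: U (ordS i); D (ordS i); D i] ++ B) else 0.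
Proof.
rewrite /emul /pmul /=.
have ec : forall v (w1 w2 : seq (arrow n)), endpt v (w1 ++ w2) = endpt (endpt v w1) w2.
  by move=> v w1 w2; rewrite /endpt foldl_cat.
case: eqP => hA /=; last by rewrite /vec big_nil.
rewrite !ec hA /= {1}/tgt /= ord_predK.
case: eqP => he /=; last by rewrite /vec big_nil.
rewrite /vec !big_cons big_nil -!catA /=.
by apply/rowP => j; rewrite !mxE; ring.
Qed.

Implicit Types (v s : 'I_n) (bs A B C : seq bool).

Lemma bv_size0 s bs : size bs != k -> bv K k s bs = 0.
Proof. by move=> h; rewrite /bv /bvec /= insubN // size_mkw. Qed.

Lemma Gen0 s A y B : size (A ++ lead y ++ B) != k -> Gen al be k s A y B = 0.
Proof.
move=> h; rewrite /Gen !bv_size0 ?scaler0 ?subr0 //; move: h; rewrite !size_cat;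
  by case: y.
Qed.

Lemma bvecT s (t : k.-tuple (arrow n)) : bvec K k (s, val t) = 'e_(enum_rank ((s, t) : Pk n k)).
Proof. by rewrite /bvec /= valK. Qed.

Definition redAt bs p := [&& (p.+2 < size bs)%N, ~~ nth true bs p & nth false bs p.+2].
Definition redB bs := has (redAt bs) (iota 0 (size bs)).
Definition pfirst bs := find (redAt bs) (iota 0 (size bs)).
Definition GenAt s bs p := Gen al be k s (take p bs) (nth false bs p.+1) (drop p.+3 bs).
Definition redP (x : Pk n k) := validp x.1 (val x.2) && redB (map snd (val x.2)).
Definition Jlist := [seq GenAt x.1 (map snd (val x.2)) (pfirst (map snd (val x.2)))
                    | x <- enum {: Pk n k} & redP x].
Definition Nlist := [seq bvec K k (x.1, val x.2) | x <- enum {: Pk n k} & ~~ redP x].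

Lemma redAt_dec bs p : redAt bs p -> bs = take p bs ++ lead (nth false bs p.+1) ++ drop p.+3 bs.
Proof.
case/and3P => hs hp hp2.
rewrite -{1}(cat_take_drop p bs); congr (_ ++ _).
rewrite (drop_nth false); last by lia.
rewrite (drop_nth false); last by lia.
rewrite (drop_nth false); last by lia.
rewrite (set_nth_default false) in hp; last by lia.
by rewrite (negbTE hp) hp2.
Qed.

Lemma redAt_cat A y B : redAt (A ++ lead y ++ B) (size A).
Proof.
rewrite /redAt !size_cat /= !nth_cat ltnn subnn /=.
have -> : ((size A).+2 < size A)%N = false by lia.
have -> : ((size A).+2 - size A)%N = 2%N by lia.
rewrite /=; apply/andP; split => //; lia.
Qed.

Lemma redB_first bs : redB bs -> redAt bs (pfirst bs).
Proof.
move=> h; have := nth_find 0 h.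
have hf : (pfirst bs < size bs)%N by move: h; rewrite /redB has_find size_iota.
by rewrite nth_iota.
Qed.

Lemma redB_cat A y B : redB (A ++ lead y ++ B).
Proof.
apply/hasP; exists (size A); last exact: redAt_cat.
rewrite mem_iota !size_cat /=; lia.
Qed.

Lemma GenAt_in s bs : size bs = k -> redB bs -> GenAt s bs (pfirst bs) \in <<Jlist>>%VS.
Proof.
move=> hk hr.
have ht : size (mkw s bs) == k by rewrite size_mkw hk.
apply: memv_span; apply/mapP; exists (s, Tuple ht).
  by rewrite mem_filter mem_enum andbT /redP /= valid_mkw map_snd_mkw.
by rewrite /= map_snd_mkw.
Qed.

Lemma Gen_in_J s A y B : Gen al be k s A y B \in <<Jlist>>%VS.
Proof.
move: {2}(mu (A ++ lead y ++ B)).+1 (ltnSn (mu (A ++ lead y ++ B))) => m.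
elim: m A y B => // m IHm A y B hm.
set w := A ++ lead y ++ B.
have [hw|hw] := eqVneq (size w) k; last by rewrite Gen0 // rpred0.
have hr : redB w by apply: redB_cat.
have hp0 := redB_first hr.
have hdec := redAt_dec hp0.
have hG0 := GenAt_in s hw hr.
have IH' : forall A1 y1 B1, (mu (A1 ++ lead y1 ++ B1) < mu w)%N ->
    Gen al be k s A1 y1 B1 \in <<Jlist>>%VS.
  by move=> A1 y1 B1 h1; apply: IHm; apply: leq_trans h1 _; rewrite -ltnS.
rewrite -[Gen _ _ _ _ _ _ _](subrK (GenAt s w (pfirst w))); apply: rpredD => //.
rewrite /GenAt.
case: (leqP (size A) (size (take (pfirst w) w))) => hle.
  by apply: conf hle _ IH'; rewrite -hdec.
rewrite -opprB rpredN.
apply: conf (ltnW hle) _ _; first by rewrite -hdec.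
by rewrite -hdec.
Qed.

Lemma bv_cat s A X B : bv K k s (A ++ X ++ B) =
  bvec K k (s, mkw s A ++ mkw (vend s A) X ++ mkw (vend (vend s A) X) B).
Proof. by rewrite /bv !mkw_cat. Qed.

Lemma vec_rel1_Gen s A i e B :
  vec k (emul (emul [:: (1, (s, mkw s A))] (rel1 al be i)) [:: (1, (e, mkw e B))]) =
  if (vend s A == i) && (ordS i == e) then Gen al be k s A true B else 0.
Proof.
rewrite vec_rel1 endpt_mkw.
case: eqP => //= hA; case: eqP => //= he; subst.
rewrite /Gen !bv_cat /= /ca /cb /vend /= !ordSK !ord_predK //.
Qed.

Lemma vec_rel2_Gen s A i e B :
  vec k (emul (emul [:: (1, (s, mkw s A))] (rel2 al be i)) [:: (1, (e, mkw e B))]) =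
  if (vend s A == ordS i) && (i == e) then Gen al be k s A false B else 0.
Proof.
rewrite vec_rel2 endpt_mkw.
case: eqP => //= hA; case: eqP => //= he; subst.
rewrite /Gen !bv_cat /= /ca /cb hA /vend /= !ordSK !ord_predK //.
Qed.

Lemma ideal_sub_J : (idealk al be k <= <<Jlist>>)%VS.
Proof.
apply/span_subvP => x /flattenP [l /allpairsP [[[s A0] r] [hp hr hl]]].
rewrite hl /= => /mapP [[e B0] hq ->] /=.
rewrite /= in hp hr.
move: hp hq; rewrite !mem_filter /= => /andP [hvA _] /andP [hvB _].
rewrite (mkw_valid hvA) (mkw_valid hvB).
move: hr; rewrite mem_cat => /orP [] /mapP [i _ ->].
  by rewrite vec_rel1_Gen; case: ifP => _; [exact: Gen_in_J | exact: rpred0].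
by rewrite vec_rel2_Gen; case: ifP => _; [exact: Gen_in_J | exact: rpred0].
Qed.

Lemma mem_allpaths v (w : seq (arrow n)) : (size w <= k)%N -> (v, w) \in allpaths n k.
Proof.
move=> hs; apply/flattenP; exists [seq (v0, val t) | v0 <- enum 'I_n, t <- enum {: (size w).-tuple (arrow n)}].
  by apply/mapP; exists (size w) => //; rewrite mem_iota; lia.
have ht : size w == size w by [].
apply/allpairsP; exists (v, Tuple ht) => /=; split => //; by rewrite mem_enum.
Qed.

Lemma Gen_in_I s A y B : size (A ++ lead y ++ B) = k -> Gen al be k s A y B \in idealk al be k.
Proof.
move=> hk.
set e := vend s (A ++ lead y).
have hA : (s, mkw s A) \in validpaths n k.
  rewrite mem_filter /= valid_mkw /=; apply: mem_allpaths; rewrite size_mkw.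
  by move: hk; rewrite !size_cat; lia.
have hB : (e, mkw e B) \in validpaths n k.
  rewrite mem_filter /= valid_mkw /=; apply: mem_allpaths; rewrite size_mkw.
  by move: hk; rewrite !size_cat; lia.
apply: memv_span; apply/flattenP.
case: y hk @e hA hB => hk e hA hB.
- exists [seq vec k (emul (emul [:: (1, (s, mkw s A))] (rel1 al be (vend s A))) [:: (1, q)]) | q <- validpaths n k].
    apply/allpairsP; exists ((s, mkw s A), rel1 al be (vend s A)); split => //.
    by rewrite mem_cat; apply/orP; left; apply/mapP; exists (vend s A) => //; rewrite mem_enum.
  apply/mapP; exists (e, mkw e B) => //.
  by rewrite vec_rel1_Gen eqxx /e vend_cat /vend /= ord_predK eqxx.
- exists [seq vec k (emul (emul [:: (1, (s, mkw s A))] (rel2 al be (ord_pred (vend s A)))) [:: (1, q)]) | q <- validpaths n k].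
    apply/allpairsP; exists ((s, mkw s A), rel2 al be (ord_pred (vend s A))); split => //.
    by rewrite mem_cat; apply/orP; right; apply/mapP; exists (ord_pred (vend s A)) => //; rewrite mem_enum.
  apply/mapP; exists (e, mkw e B) => //.
  by rewrite vec_rel2_Gen ord_predK eqxx /e vend_cat /vend /= ord_predK eqxx.
Qed.

Lemma GenAt_dec s bs : redB bs -> bv K k s bs =
  GenAt s bs (pfirst bs)
  + ca al (nth false bs (pfirst bs).+1) (vend s (take (pfirst bs) bs)) *:
      bv K k s (take (pfirst bs) bs ++ t1 (nth false bs (pfirst bs).+1) ++ drop (pfirst bs).+3 bs)
  + cb be (nth false bs (pfirst bs).+1) (vend s (take (pfirst bs) bs)) *:
      bv K k s (take (pfirst bs) bs ++ t2 (nth false bs (pfirst bs).+1) ++ drop (pfirst bs).+3 bs).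
Proof.
move=> hr; have hdec := redAt_dec (redB_first hr).
rewrite /GenAt /Gen -hdec.
by apply/rowP => j; rewrite !mxE; ring.
Qed.

Lemma bv_in s bs : size bs = k -> bv K k s bs \in (<<Nlist>> + <<Jlist>>)%VS.
Proof.
move: {2}(mu bs).+1 (ltnSn (mu bs)) => m.
elim: m bs => // m IHm bs hm hk.
case: (boolP (redB bs)) => hr.
  have hdec := redAt_dec (redB_first hr).
  have hs : size (take (pfirst bs) bs ++ lead (nth false bs (pfirst bs).+1) ++ drop (pfirst bs).+3 bs) = k
    by rewrite -hdec.
  rewrite GenAt_dec //; apply: rpredD; first apply: rpredD.
  - by apply: (subvP (addvSr _ _)); apply: GenAt_in.
  - apply: rpredZ; apply: IHm.
      by apply: leq_trans (mu_t1 _ _ _) _; rewrite -hdec -ltnS.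
    by move: hs; rewrite !size_cat; case: (nth false bs _).
  - apply: rpredZ; apply: IHm.
      by apply: leq_trans (mu_t2 _ _ _) _; rewrite -hdec -ltnS.
    by move: hs; rewrite !size_cat; case: (nth false bs _).
have ht : size (mkw s bs) == k by rewrite size_mkw hk.
apply: (subvP (addvSl _ _)); apply: memv_span; apply/mapP; exists (s, Tuple ht) => //.
by rewrite mem_filter mem_enum andbT /redP /= map_snd_mkw (negbTE hr) andbF.
Qed.

Lemma NJ_full : (<<Nlist>> + <<Jlist>>)%VS = fullv.
Proof.
apply/eqP; rewrite eqEsubv subvf /=.
apply/subvP => x _; rewrite (row_sum_delta x); apply: memv_suml => j _; apply: rpredZ.
rewrite -(enum_valK j); case: (enum_val j) => s t.
rewrite -bvecT.
case: (boolP (redP (s, t))) => hr.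
  case/andP: hr => /= hv _.
  rewrite (mkw_valid hv); apply: bv_in.
  by rewrite size_map size_tuple.
apply: (subvP (addvSl _ _)); apply: memv_span; apply/mapP; exists (s, t) => //.
by rewrite mem_filter mem_enum andbT.
Qed.

Lemma NJ_cap0 : (<<Nlist>> :&: <<Jlist>> = 0)%VS.
Proof.
apply/eqP; rewrite -dimv_eq0.
have h1 := dimv_sum_cap <<Nlist>> <<Jlist>>.
rewrite NJ_full dimvf /dim /= in h1.
have hN := dim_span Nlist; have hJ := dim_span Jlist.
rewrite !size_map !size_filter in hN hJ.
have hc := count_predC redP (enum {: Pk n k}).
rewrite -cardE in hc.
rewrite /Nk in h1.
have e1 : count (fun x => ~~ redP x) (enum {: Pk n k}) = count (predC redP) (enum {: Pk n k}) by [].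
rewrite e1 in hN.
have e2 : count [eta redP] (enum {: Pk n k}) = count redP (enum {: Pk n k}) by [].
rewrite e2 in hJ.
have h3 : (\dim <<Nlist>> + \dim <<Jlist>> <= #|{: Pk n k}|)%N by rewrite -hc addnC leq_add.
have aux : forall a b c m : nat, (a + b <= m)%N -> (1 * m + c = a + b)%N -> c == 0.
  by move=> a b c m ? ?; apply/eqP; lia.
exact: (aux _ _ _ _ h3 h1).
Qed.

Implicit Types (i j : 'I_n).
Definition nrm (i j : 'I_n) (t : k.-tuple (arrow n)) :=
  validp i (val t) && (endpt i (val t) == j) && ~~ redB (map snd (val t)).
Definition Nij i j := <<[seq bvec K k (i, val t) | t <- tuples n k & nrm i j t]>>%VS.

Lemma bv_in_P i j bs : size bs = k -> vend i bs = j -> bv K k i bs \in pathspace K i j k.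
Proof.
move=> hk hj.
have ht : size (mkw i bs) == k by rewrite size_mkw hk.
apply: memv_span; apply/mapP; exists (Tuple ht) => //.
by rewrite mem_filter /tuples mem_enum andbT /= valid_mkw endpt_mkw hj eqxx.
Qed.

Lemma Gen_in_P i j A y B : size (A ++ lead y ++ B) = k -> vend i (A ++ lead y ++ B) = j ->
  Gen al be k i A y B \in pathspace K i j k.
Proof.
move=> hk hj; rewrite /Gen; apply: rpredB; first apply: rpredB.
- exact: bv_in_P.
- apply: rpredZ; apply: bv_in_P.
    by move: hk; rewrite !size_cat; case: (y).
  by rewrite !vend_cat vend_t1 -!vend_cat.
- apply: rpredZ; apply: bv_in_P.
    by move: hk; rewrite !size_cat; case: (y).
  by rewrite !vend_cat vend_t2 -!vend_cat.
Qed.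

Lemma bv_in_blk i j bs : size bs = k -> vend i bs = j ->
  bv K k i bs \in (Nij i j + (pathspace K i j k :&: idealk al be k))%VS.
Proof.
move: {2}(mu bs).+1 (ltnSn (mu bs)) => m.
elim: m bs => // m IHm bs hm hk hj.
case: (boolP (redB bs)) => hr.
  have hdec := redAt_dec (redB_first hr).
  have hs : size (take (pfirst bs) bs ++ lead (nth false bs (pfirst bs).+1) ++ drop (pfirst bs).+3 bs) = k
    by rewrite -hdec.
  have hv : vend i (take (pfirst bs) bs ++ lead (nth false bs (pfirst bs).+1) ++ drop (pfirst bs).+3 bs) = j
    by rewrite -hdec.
  rewrite GenAt_dec //; apply: rpredD; first apply: rpredD.
  - apply: (subvP (addvSr _ _)); rewrite memv_cap; apply/andP; split.
      exact: Gen_in_P.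
    exact: Gen_in_I.
  - apply: rpredZ; apply: IHm.
    + by apply: leq_trans (mu_t1 _ _ _) _; rewrite -hdec -ltnS.
    + by move: hs; rewrite !size_cat; case: (nth false bs _).
    + by rewrite !vend_cat vend_t1 -!vend_cat.
  - apply: rpredZ; apply: IHm.
    + by apply: leq_trans (mu_t2 _ _ _) _; rewrite -hdec -ltnS.
    + by move: hs; rewrite !size_cat; case: (nth false bs _).
    + by rewrite !vend_cat vend_t2 -!vend_cat.
have ht : size (mkw i bs) == k by rewrite size_mkw hk.
apply: (subvP (addvSl _ _)); apply: memv_span; apply/mapP; exists (Tuple ht) => //.
by rewrite mem_filter /tuples mem_enum andbT /nrm /= valid_mkw endpt_mkw hj eqxx map_snd_mkw hr.
Qed.

Lemma P_split i j : (pathspace K i j k = Nij i j + (pathspace K i j k :&: idealk al be k))%VS.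
Proof.
apply/eqP; rewrite eqEsubv; apply/andP; split.
  apply/span_subvP => x /mapP [t]; rewrite mem_filter => /andP [/andP [hv /eqP hj] _] ->.
  rewrite (mkw_valid hv); apply: bv_in_blk; first by rewrite size_map size_tuple.
  by rewrite -endpt_mkw -(mkw_valid hv).
rewrite subv_add capvSl andbT.
apply/span_subvP => x /mapP [t]; rewrite mem_filter => /andP [ht _] ->.
apply: memv_span; apply/mapP; exists t => //.
by rewrite mem_filter /tuples mem_enum andbT; case/andP: ht => ->.
Qed.

Lemma Nij_cap i j : (Nij i j :&: (pathspace K i j k :&: idealk al be k) = 0)%VS.
Proof.
apply/eqP; rewrite -subv0 -NJ_cap0; apply: capvS.
  apply/span_subvP => x /mapP [t]; rewrite mem_filter => /andP [ht _] ->.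
  apply: memv_span; apply/mapP; exists (i, t) => //.
  rewrite mem_filter mem_enum andbT /redP /=.
  by case/andP: ht => /andP [-> _] ->.
exact: subv_trans (capvSr _ _) ideal_sub_J.
Qed.

Lemma hdim_count i j : hdim al be i j k = count (nrm i j) (tuples n k).
Proof.
rewrite /hdim {1}(P_split i j) dimv_disjoint_sum ?Nij_cap // addnK.
rewrite /Nij.
have -> : [seq bvec K k (i, val t) | t <- tuples n k & nrm i j t] =
          [seq 'e_l | l <- [seq enum_rank ((i, t) : Pk n k) | t <- tuples n k & nrm i j t]].
  by rewrite -map_comp; apply: eq_map => t /=; rewrite bvecT.
rewrite dim_deltas; first by rewrite size_map size_filter.
rewrite map_inj_uniq; first by apply: filter_uniq; exact: enum_uniq.
by move=> t1 t2 /enum_rank_inj [].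
Qed.
End T.

Section Shift.
Variable n : nat.
Hypothesis hn : (0 < n)%N.

Lemma sh_subproof (z : int) (i : 'I_n) : (absz ((i%:Z + z) %% n)%Z < n)%N.
Proof.
have h0 : (0 <= ((i%:Z + z) %% n)%Z)%R by apply: modz_ge0; rewrite -lt0n.
have h1 : (((i%:Z + z) %% n)%Z < n%:Z)%R by apply: ltz_pmod; rewrite ltz_nat.
by rewrite -ltz_nat gez0_abs.
Qed.
Definition sh (z : int) (i : 'I_n) : 'I_n := Ordinal (sh_subproof z i).

Lemma sh_val z i : ((sh z i : nat)%:Z = ((i%:Z + z) %% n)%Z).
Proof.
rewrite /= gez0_abs //; apply: modz_ge0; rewrite -lt0n //.
Qed.

Lemma sh_comp z w i : sh z (sh w i) = sh (w + z) i.
Proof.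
apply: val_inj; apply/eqP; rewrite -eqz_nat !sh_val.
by rewrite modzDml addrA.
Qed.

Lemma sh0 i : sh 0 i = i.
Proof.
apply: val_inj; apply/eqP; rewrite -eqz_nat sh_val addr0 modz_small //.
by apply/andP; split => //; rewrite ltz_nat.
Qed.

Lemma ordS_sh i : ordS i = sh 1 i.
Proof.
apply: val_inj; apply/eqP; rewrite -eqz_nat sh_val /=.
by rewrite -modz_nat -[i.+1]addn1 PoszD.
Qed.

Lemma ord_pred_sh i : ord_pred i = sh (-1) i.
Proof.
apply/(@ordS_inj n); rewrite ord_predK ordS_sh sh_comp addNr sh0 //.
Qed.
End Shift.


Section Words2.
Variable n : nat.
Hypothesis hn : (0 < n)%N.

Definition word (a c k : nat) : seq bool :=
  mkseq (fun p => if odd p then (p./2 < c)%N else (p./2 < a)%N) k.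

Lemma size_word a c k : size (word a c k) = k.
Proof. by rewrite size_mkseq. Qed.

Lemma wordSS a c k : word a c k.+2 = (0 < a)%N :: (0 < c)%N :: word a.-1 c.-1 k.
Proof.
rewrite /word /mkseq /=.
have -> : iota 2 k = map (addn 2) (iota 0 k) by rewrite -iotaDl addn0.
rewrite -map_comp.
congr [:: _, _ & _]; apply: eq_map => p /=.
by case: (odd p); case: a; case: c.
Qed.

Lemma word_nonred a c k : ~~ redB (word a c k).
Proof.
rewrite /redB; apply/hasPn => p _; rewrite /redAt size_word.
apply/negP => /and3P [hp h1 h2].
rewrite (set_nth_default false) in h1; last by rewrite size_word; lia.
rewrite /word !nth_mkseq /= in h1 h2; try lia.
move: h1 h2; case: (odd p) => /= h1 h2; lia.
Qed.

Lemma two_step (P : nat -> Prop) : P 0%N -> P 1%N -> (forall k, P k -> P k.+2) -> forall k, P k.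
Proof.
move=> h0 h1 hS k; suff : P k /\ P k.+1 by case.
by elim: k => [|k [IH1 IH2]]; split => //; apply: hS.
Qed.

Lemma step_sh (v : 'I_n) b : step v b = sh hn (if b then 1 else -1) v.
Proof. by case: b; rewrite /step ?ordS_sh ?ord_pred_sh. Qed.

Lemma word_vend (i : 'I_n) k a c : (a <= uphalf k)%N -> (c <= k./2)%N ->
  vend i (word a c k) = sh hn (2 * a%:Z + 2 * c%:Z - k%:Z) i.
Proof.
elim/two_step: k a c i => [a c i|a c i|k IH a c i].
- rewrite !leqn0 => /eqP -> /eqP ->; by rewrite /= sh0.
- rewrite leqn0 => ha /eqP ->; case: a ha => [|[|a]] //= _; rewrite /vend /=.
    by rewrite ord_pred_sh.
  by rewrite ordS_sh.
- move=> ha hc; rewrite wordSS /vend /= -/(vend _ _) IH; last 2 first.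
    by move: ha => /=; lia.
  by move: hc => /=; lia.
  rewrite !step_sh !sh_comp; congr sh.
  by case: a {ha} => [|a]; case: c {hc} => [|c] /=; rewrite ?PoszD; lia.
Qed.

Lemma word_inj k a c a' c' : (a <= uphalf k)%N -> (c <= k./2)%N ->
  (a' <= uphalf k)%N -> (c' <= k./2)%N -> word a c k = word a' c' k -> a = a' /\ c = c'.
Proof.
elim/two_step: k a c a' c' => [a c a' c'|a c a' c'|k IH a c a' c'].
- by rewrite !leqn0 => /eqP -> /eqP -> /eqP -> /eqP ->.
- rewrite /= !leqn0 => ha /eqP -> ha' /eqP -> [].
  by case: a ha => [|[|]] //; case: a' ha' => [|[|]].
- rewrite wordSS wordSS /= => ha hc ha' hc' [e1 e2 e3].
  have [] := IH _ _ _ _ _ _ _ _ e3.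
  + by lia.
  + by lia.
  + by lia.
  + by lia.
  move=> h1 h2; move: e1 e2 h1 h2; clear.
  by case: a => [|a]; case: a' => [|a'] //=; case: c => [|c]; case: c' => [|c'] //= _ _ h1 h2; rewrite ?h1 ?h2.
Qed.

Lemma redB_cons x bs : redB (x :: bs) = redAt (x :: bs) 0 || redB bs.
Proof.
rewrite /redB /= -[1%N]addn0 iotaDl has_map; congr orb.
Qed.

Lemma nth_word0 a c k : (0 < k)%N -> nth false (word a c k) 0 = (0 < a)%N.
Proof. by move=> hk; rewrite /word nth_mkseq. Qed.
Lemma nth_word1 a c k : (1 < k)%N -> nth false (word a c k) 1 = (0 < c)%N.
Proof. by move=> hk; rewrite /word nth_mkseq. Qed.

Lemma word_surj k bs : size bs = k -> ~~ redB bs ->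
  exists a c, [/\ (a <= uphalf k)%N, (c <= k./2)%N & bs = word a c k].
Proof.
elim/two_step: k bs => [bs|bs|k IH bs].
- by move/size0nil => -> _; exists 0%N, 0%N.
- case: bs => [|x [|]] //= _ _; exists (nat_of_bool x), 0%N; split => //; first by case: x.
  by rewrite /word /=; case: x.
- case: bs => [|x [|y w]] //= [hw]; rewrite !redB_cons !negb_or => /and3P [h0 h1 hr].
  have [a' [c' [ha hc ew]]] := IH _ hw hr.
  exists (if x then a'.+1 else 0%N), (if y then c'.+1 else 0%N); split.
  + by case: (x) => /=; lia.
  + by case: (y) => /=; lia.
  rewrite wordSS ew; congr [:: _, _ & _].
  + by case: (x).
  + by case: (y).
  have -> : (if x then a'.+1 else 0%N).-1 = a'.
    case: x h0 => //=; case: k IH hw ew ha hc => [|k] IH hw ew ha hc; first by move: ha; rewrite leqn0 => /eqP.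
    rewrite /redAt /= ew nth_word0 // => h0.
    by case: a' ew ha h0.
  have -> : (if y then c'.+1 else 0%N).-1 = c'.
    clear h0; case: y h1 => //=; case: k IH hw ew ha hc => [|[|k]] IH hw ew ha hc.
    * by move: hc; rewrite leqn0 => /eqP.
    * by move: hc; rewrite leqn0 => /eqP.
    rewrite /redAt /= ew nth_word1 // => h1.
    by case: c' ew hc h1.
  by [].
Qed.
End Words2.

Lemma count_card (T : finType) (p : pred T) : count p (enum {: T}) = #|[pred x | p x]|.
Proof.
rewrite cardE /enum_mem size_filter /= count_filter.
by apply: eq_count => x; rewrite /= !inE andbT.
Qed.

Section Card.
Variable n : nat.
Hypothesis hn : (0 < n)%N.
Variable k : nat.

Lemma mkwT_proof (i : 'I_n) (bs : k.-tuple bool) : size (mkw i bs) == k.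
Proof. by rewrite size_mkw size_tuple. Qed.
Definition mkwT i bs := Tuple (mkwT_proof i bs).

Lemma mkwT_inj i : injective (mkwT i).
Proof.
move=> b1 b2 h; apply: val_inj.
have := congr1 (fun t : k.-tuple (arrow n) => map snd (val t)) h.
by rewrite /= !map_snd_mkw.
Qed.

Lemma cardA1 (i j : 'I_n) : count (nrm i j) (tuples n k) =
  #|[pred bs : k.-tuple bool | (vend i bs == j) && ~~ redB bs]|.
Proof.
rewrite /tuples count_card -(card_imset _ (@mkwT_inj i)).
apply: eq_card => t; rewrite inE.
apply/idP/imsetP.
- rewrite /nrm => /andP [/andP [hv he] hr]; exists (map_tuple snd t).
    by rewrite inE /= -endpt_mkw -(mkw_valid hv) he.
  by apply: val_inj => /=; exact: mkw_valid hv.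
- case=> bs; rewrite inE => /andP [he hr] ->.
  by rewrite /nrm /= valid_mkw endpt_mkw he map_snd_mkw hr.
Qed.

Definition wordT (x : 'I_(uphalf k).+1 * 'I_(k./2).+1) : k.-tuple bool :=
  Tuple (introT eqP (size_word x.1 x.2 k)).

Lemma wordT_inj : injective wordT.
Proof.
move=> [a c] [a' c'] h.
have e := congr1 val h; rewrite /= in e.
have [] := word_inj hn _ _ _ _ e; try by rewrite -ltnS.
by move=> e1 e2; congr pair; apply: val_inj.
Qed.

Lemma cardA2 (i j : 'I_n) :
  #|[pred bs : k.-tuple bool | (vend i bs == j) && ~~ redB bs]| =
  (\sum_(a < (uphalf k).+1) \sum_(c < (k./2).+1)
     (sh hn (2 * a%:Z + 2 * c%:Z - k%:Z) i == j))%N.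
Proof.
rewrite pair_big /=.
have -> : #|[pred bs : k.-tuple bool | (vend i bs == j) && ~~ redB bs]| =
          #|wordT @: [set x : 'I_(uphalf k).+1 * 'I_(k./2).+1 | vend i (word x.1 x.2 k) == j]|.
  apply: eq_card => bs; rewrite inE.
  apply/idP/imsetP.
  - case/andP => he hr.
    have [a [c [ha hc ew]]] := word_surj hn (size_tuple bs) hr.
    exists (Ordinal (n:=(uphalf k).+1) (m:=a) ha, Ordinal (n:=(k./2).+1) (m:=c) hc).
      by rewrite inE /= -ew.
    by apply: val_inj => /=.
  - case=> x; rewrite inE => he ->.
    by rewrite /= he (word_nonred hn).
rewrite (card_imset _ wordT_inj) -sum1_card big_mkcond /=.
apply: eq_bigr => [[a c]] _; rewrite inE /= word_vend //; last by rewrite -ltnS.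
by rewrite -ltnS.
Qed.
End Card.

Section Mat.
Variable n : nat.
Hypothesis hn : (0 < n)%N.

Definition Z (z : int) : 'M[int]_n := \matrix_(i, j) ((sh hn z i == j) : nat)%:Z.

Lemma sum_eq1 (F : 'I_n -> int) (i0 : 'I_n) :
  \sum_l ((i0 == l) : nat)%:Z * F l = F i0.
Proof.
rewrite (bigD1 i0) //= eqxx mul1r big1 ?addr0 // => l hl.
by rewrite eq_sym (negbTE hl) mul0r.
Qed.

Lemma Z_mul z w : Z z *m Z w = Z (z + w).
Proof.
apply/matrixP => i j; rewrite !mxE.
under eq_bigr do rewrite !mxE.
by rewrite sum_eq1 sh_comp.
Qed.

Lemma Z_comm z w : Z z *m Z w = Z w *m Z z.
Proof. by rewrite !Z_mul addrC. Qed.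

Lemma adjM_Z : adjM n = Z 1 + Z (-1).
Proof.
apply/matrixP => i j; rewrite !mxE.
rewrite -sum1_card big_mkcond /=.
rewrite (eq_bigr (fun p : arrow n => (if (p.1, p.2) \in [pred a : arrow n | (src a == i) && (tgt a == j)] then 1 else 0)%N)); last by case.
rewrite -(pair_bigA _ (fun (x : 'I_n) (b : bool) => if (x, b) \in [pred a : arrow n | (src a == i) && (tgt a == j)] then 1%N else 0%N)) /=.
under eq_bigr do rewrite big_bool /=.
rewrite big_split /= PoszD; congr (_ + _).
  rewrite (bigD1 i) //= !inE /src /tgt /= eqxx /= big1 ?addn0.
    by rewrite ordS_sh.
  by move=> x hx; rewrite inE /src /= (negbTE hx).
rewrite (bigD1 j) //= !inE /src /tgt /= eqxx andbT big1 ?addn0.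
  rewrite -ord_pred_sh.
  have -> : (ordS j == i) = (ord_pred i == j).
    by apply/eqP/eqP => h; [rewrite -h ordSK | rewrite -h ord_predK].
  by case: (_ == _).
by move=> x hx; rewrite inE /tgt /= (negbTE hx) andbF.
Qed.

Definition H (m : nat) : 'M[int]_n := \sum_(a < m.+1) Z (2 * a%:Z - m%:Z).
Definition Mz := Z 1 + Z (-1).

Lemma H_rec m : H m.+2 = Mz *m H m.+1 - H m.
Proof.
rewrite /Mz mulmxDl !mulmx_sumr.
under eq_bigr do rewrite Z_mul.
under [X in _ = _ + X - _]eq_bigr do rewrite Z_mul.
rewrite /H [in LHS]big_ord_recr /=.
have hm1 : (m.+1)%:Z = m%:Z + 1 by rewrite -addn1 PoszD.
have hm2 : (m.+2)%:Z = m%:Z + 2 by rewrite -addn2 PoszD.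
have e1 : \sum_(i < m.+2) Z (1 + (2 * (i : nat)%:Z - (m.+1)%:Z)) = \sum_(a < m.+1) Z (2 * a%:Z - m%:Z) + Z ((m.+2)%:Z).
  rewrite big_ord_recr /=; congr (_ + _).
    by apply: eq_bigr => a _; congr Z; rewrite hm1; ring.
  by congr Z; rewrite hm1 hm2; ring.
rewrite e1.
have e2 : \sum_(i < m.+2) Z (-1 + (2 * (i : nat)%:Z - (m.+1)%:Z)) = \sum_(i < m.+2) Z (2 * (i : nat)%:Z - (m.+2)%:Z).
  by apply: eq_bigr => a _; congr Z; rewrite hm1 hm2; ring.
rewrite e2.
have e3 : Z (2 * (m.+2)%:Z - (m.+2)%:Z) = Z ((m.+2)%:Z) by congr Z; ring.
rewrite e3.
set a := Z _; set b := \sum_(i < m.+2) _; set c := \sum_(i < m.+1) _.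
by rewrite [c + a]addrC [RHS]addrAC addrK addrC.
Qed.

Lemma HZ_comm m z : H m *m Z z = Z z *m H m.
Proof.
rewrite /H mulmx_suml mulmx_sumr; apply: eq_bigr => a _; exact: Z_comm.
Qed.

Lemma HH_comm m m' : H m *m H m' = H m' *m H m.
Proof.
rewrite {1}/H mulmx_sumr {2}/H mulmx_suml; apply: eq_bigr => a _; exact: HZ_comm.
Qed.

Lemma HM_comm m : H m *m Mz = Mz *m H m.
Proof. by rewrite /Mz mulmxDr mulmxDl !HZ_comm. Qed.

Lemma H0 : H 0 = 1%:M.
Proof.
rewrite /H big_ord1 /= mulr0 subrr; apply/matrixP => i j; rewrite !mxE.
by rewrite (_ : sh hn 0 i = i) ?sh0 //; case: (i == j).
Qed.

Lemma H1 : H 1 = Mz.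
Proof.
rewrite /H /Mz big_ord_recr big_ord1 /= addrC; congr (Z _ + Z _).
Qed.

Lemma HH_entry m m' i j : (H m *m H m') i j =
  \sum_(a < m.+1) \sum_(c < m'.+1) ((sh hn (2 * a%:Z - m%:Z + (2 * c%:Z - m'%:Z)) i == j) : nat)%:Z.
Proof.
rewrite /H mulmx_suml summxE; apply: eq_bigr => a _.
rewrite mulmx_sumr summxE; apply: eq_bigr => c _.
by rewrite Z_mul mxE.
Qed.
End Mat.

Fixpoint Pp (m : nat) : {poly int} :=
  match m with
  | 0 => 1
  | 1 => 'X
  | S ((S m1) as m2) => 'X * Pp m2 - Pp m1
  end.
Definition Qp (j : nat) : {poly int} := Pp (uphalf j) * Pp j./2.
Definition ap (l : nat) : {poly int} := nth 0 [:: 1; - 'X; 0; 'X; -1] l.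

Lemma poly_id k : \sum_(l < k.+1) ap l * Qp (k - l) = (k == 0)%:R.
Proof.
case: k => [|[|[|[|k]]]].
- by rewrite big_ord1 /ap /Qp /= mul1r mulr1.
- by rewrite !big_ord_recl big_ord0 /ap /Qp /=; ring.
- by rewrite !big_ord_recl big_ord0 /ap /Qp /=; ring.
- by rewrite !big_ord_recl big_ord0 /ap /Qp /=; ring.
rewrite !big_ord_recl big1 ?addr0; last first.
  by move=> l _; rewrite /ap nth_default ?mul0r.
rewrite /ap /= !subSS !subn0 /Qp.
rewrite -(odd_double_half k); case: (odd k) => /=;
  rewrite ?uphalf_double ?doubleK /=; ring.
Qed.

Definition b1 (l : nat) : {poly int} := nth 0 [:: 1; - 'X; 1] l.
Definition b2 (l : nat) : {poly int} := nth 0 [:: 1; 0; -1] l.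

Lemma poly_id2 l : \sum_(i < l.+1) b1 i * b2 (l - i) = ap l.
Proof.
case: l => [|[|[|[|[|l]]]]].
- by rewrite big_ord1 /b1 /b2 /ap /= mul1r.
- by rewrite !big_ord_recl big_ord0 /b1 /b2 /ap /=; ring.
- by rewrite !big_ord_recl big_ord0 /b1 /b2 /ap /=; ring.
- by rewrite !big_ord_recl big_ord0 /b1 /b2 /ap /=; ring.
- by rewrite !big_ord_recl big_ord0 /b1 /b2 /ap /=; ring.
rewrite big1; first by rewrite /ap /= nth_nil.
move=> i _; case: (ltnP i 3) => hi.
  by rewrite /b2 nth_default ?mulr0 //=; lia.
by rewrite /b1 nth_default ?mul0r.
Qed.


Lemma sum_rev (F G : nat -> {poly int}) k :
  \sum_(l < k.+1) F l * G (k - l)%N = \sum_(l < k.+1) G l * F (k - l)%N.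
Proof.
rewrite (reindex_inj rev_ord_inj) /=; apply: eq_bigr => l _.
rewrite subSS subKn; first exact: mulrC.
by rewrite -ltnS.
Qed.

Section Final.
Variable n' : nat.
Local Notation n := n'.+1.
Let hn : (0 < n)%N := ltn0Sn n'.

Lemma H_horner m : H hn m = horner_mx (Mz hn) (Pp m).
Proof.
suff : H hn m = horner_mx (Mz hn) (Pp m) /\ H hn m.+1 = horner_mx (Mz hn) (Pp m.+1) by case.
elim: m => [|m [IH1 IH2]].
  by rewrite H0 H1 /=; split; [rewrite [RHS]rmorph1 | rewrite horner_mx_X].
split => //.
by rewrite H_rec IH1 IH2 /= rmorphB rmorphM /= horner_mx_X mulmxE.
Qed.

Lemma Hmat_C (K : fieldType) (al be : 'I_n -> K) k :
  Hmat al be k = H hn (uphalf k) *m H hn (k./2).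
Proof.
apply/matrixP => i j; rewrite mxE HH_entry hdim_count cardA1 (cardA2 hn).
have ek : (uphalf k)%:Z + (k./2)%:Z = k%:Z.
  by rewrite -PoszD uphalf_half -addnA addnn odd_double_half.
rewrite (big_morph Posz PoszD (erefl (Posz 0))); apply: eq_bigr => a _.
rewrite (big_morph Posz PoszD (erefl (Posz 0))); apply: eq_bigr => c _.
have -> : 2 * (a : nat)%:Z + 2 * (c : nat)%:Z - k%:Z =
          2 * (a : nat)%:Z - (uphalf k)%:Z + (2 * (c : nat)%:Z - (k./2)%:Z).
  by rewrite -ek; ring.
by [].
Qed.


Lemma hm1 : horner_mx (Mz hn) 1 = 1%:M.
Proof. exact: rmorph1. Qed.

Lemma A_horner l : pscoef [:: 1%:M; - adjM n; 0; adjM n; - 1%:M] l = horner_mx (Mz hn) (ap l).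
Proof.
rewrite /pscoef /ap (adjM_Z hn) -/(Mz hn).
case: l => [|[|[|[|[|l]]]]] /=.
- by rewrite hm1.
- by rewrite rmorphN /= horner_mx_X.
- by rewrite raddf0.
- by rewrite horner_mx_X.
- by rewrite rmorphN /= hm1.
- by rewrite !nth_nil raddf0.
Qed.

Lemma B1_horner l : pscoef [:: 1%:M; - adjM n; 1%:M] l = horner_mx (Mz hn) (b1 l).
Proof.
rewrite /pscoef /b1 (adjM_Z hn) -/(Mz hn).
case: l => [|[|[|l]]] /=.
- by rewrite hm1.
- by rewrite rmorphN /= horner_mx_X.
- by rewrite hm1.
- by rewrite !nth_nil raddf0.
Qed.

Lemma B2_horner l : pscoef [:: (1%:M : 'M[int]_n); 0; - 1%:M] l = horner_mx (Mz hn) (b2 l).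
Proof.
rewrite /pscoef /b2.
case: l => [|[|[|l]]] /=.
- by rewrite hm1.
- by rewrite raddf0.
- by rewrite rmorphN /= hm1.
- by rewrite !nth_nil raddf0.
Qed.

Lemma h_horner (K : fieldType) (al be : 'I_n -> K) k : Hmat al be k = horner_mx (Mz hn) (Qp k).
Proof. by rewrite Hmat_C !H_horner rmorphM mulmxE. Qed.

Lemma psone_horner k : psone n k = horner_mx (Mz hn) ((k == 0)%:R).
Proof. by case: k => [|k] /=; rewrite /psone /=; [rewrite hm1 | rewrite rmorph0]. Qed.

Lemma main (K : fieldType) (al be : 'I_n -> K) :
  let M := adjM n in
  let h := Hmat al be in
  ps_inverse (pscoef [:: 1%:M; - M; 0; M; - 1%:M]) h /\
  ps_inverse (psmul (pscoef [:: 1%:M; - M; 1%:M]) (pscoef [:: 1%:M; 0; - 1%:M])) h.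
Proof.
move=> M h.
have hA : forall k, psmul (pscoef [:: 1%:M; - M; 0; M; - 1%:M]) h k = psone n k.
  move=> k; rewrite /psmul psone_horner -(poly_id k) rmorph_sum; apply: eq_bigr => l _.
  by rewrite A_horner /h h_horner mulmxE -rmorphM.
have hA' : forall k, psmul h (pscoef [:: 1%:M; - M; 0; M; - 1%:M]) k = psone n k.
  move=> k; rewrite /psmul psone_horner -(poly_id k) sum_rev rmorph_sum; apply: eq_bigr => l _.
  by rewrite A_horner /h h_horner mulmxE -rmorphM.
have hB : forall l, psmul (pscoef [:: 1%:M; - M; 1%:M]) (pscoef [:: 1%:M; 0; - 1%:M]) l =
                    pscoef [:: 1%:M; - M; 0; M; - 1%:M] l.
  move=> l; rewrite A_horner -poly_id2 /psmul rmorph_sum; apply: eq_bigr => i _.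
  by rewrite B1_horner B2_horner mulmxE -rmorphM.
split; first by split.
split => k.
  rewrite -hA; move: (psmul _ _) hB => f hB.
  by rewrite /psmul; apply: eq_bigr => l _; rewrite hB.
rewrite -hA'; move: (psmul _ _) hB => f hB.
by rewrite /psmul; apply: eq_bigr => l _; rewrite hB.
Qed.
End Final.

Theorem lemma3p5 (K : closedFieldType) (hK : [pchar K] =i pred0)
  (n : nat) (hn : (0 < n)%N) (alpha beta : 'I_n -> K) :
  let M := adjM n in
  let h := Hmat alpha beta in
  ps_inverse (pscoef [:: 1%:M; - M; 0; M; - 1%:M]) h /\
  ps_inverse (psmul (pscoef [:: 1%:M; - M; 1%:M]) (pscoef [:: 1%:M; 0; - 1%:M])) h.
Proof.
case: n hn alpha beta => [//|n'] hn alpha beta.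
exact: main.
Qed.
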